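(* Let $N,m>0$ be integers and let $u_1,\dots,u_m\in\overline{\mathbb F}_q$ (an algebraic closure of $\mathbb F_q$) be such that their minimal polynomials over $\mathbb F_q$ are pairwise distinct. Let $k_i=[\mathbb F_q(u_i):\mathbb F_q]$ and let $A(u_i)\in M_{k_i\times N}(\mathbb F_q)$ be the matrix defined by $[u_i^0,u_i^1,\dots,u_i^{N-1}]=[u_i^0,\dots,u_i^{k_i-1}]A(u_i)$. Then the $(k_1+\cdots+k_m)\times N$ matrix obtained by stacking $A(u_1),\dots,A(u_m)$ vertically has rank $\min\{k_1+\cdots+k_m,\,N\}$. *)

(* Defs.v *)
From HB Require Import structures.
From mathcomp Require Import all_boot all_order all_algebra all_field.
Set Implicit Arguments. Unset Strict Implicit. Unset Printing Implicit Defensive.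
Import GRing.Theory.
Local Open Scope ring_scope.

Definition ext_degree (F : finFieldType) (L : fieldExtType F) (u : L) : nat :=
  adjoin_degree 1%VS u.

Definition is_A_matrix (F : finFieldType) (L : fieldExtType F) (N : nat)
  (u : L) (A : 'M[F]_(ext_degree u, N)) : Prop :=
  forall n : 'I_N, u ^+ n = \sum_(j < ext_degree u) A j n *: u ^+ j.

(* Main.v *)
Require Import Defs.
From HB Require Import structures.
From mathcomp Require Import all_boot all_order all_algebra all_field.
Set Implicit Arguments. Unset Strict Implicit. Unset Printing Implicit Defensive.
Import GRing.Theory.
Local Open Scope ring_scope.

Section S.
Variables (F : finFieldType) (L : fieldExtType F).

Lemma minPoly_coprime (x y : L) : minPoly 1%VS x != minPoly 1%VS y ->
  coprimep (minPoly 1%VS x) (minPoly 1%VS y).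
Proof.
move=> neq.
have gK : gcdp (minPoly 1%VS x) (minPoly 1%VS y) \is a polyOver 1%VS.
  by rewrite gcdp_polyOver ?minPolyOver.
have /orP[g1|g1] := minPoly_irr gK (dvdp_gcdl _ _); last first.
  by rewrite coprimep_def size_poly_eq1.
have /orP[g2|g2] := minPoly_irr gK (dvdp_gcdr _ _).
  have : minPoly 1%VS x %= minPoly 1%VS y.
    by rewrite (eqp_trans _ g2) // eqp_sym.
  by rewrite eqp_monic ?monic_minPoly // (negbTE neq).
by rewrite coprimep_def size_poly_eq1.
Qed.

Lemma prod_dvd m (u : 'I_m -> L) (q : {poly L}) :
  injective (fun i => minPoly 1%VS (u i)) ->
  (forall i, minPoly 1%VS (u i) %| q) ->
  \prod_(i < m) minPoly 1%VS (u i) %| q.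
Proof.
move=> inj dv.
rewrite -big_enum /=.
have : uniq (enum 'I_m) by apply: enum_uniq.
elim: (enum 'I_m) => [|a s IH] /=; first by rewrite big_nil dvd1p.
case/andP=> as_ us.
rewrite big_cons Gauss_dvdp ?dv ?IH //.
elim: s as_ {IH us} => [|b s IH2]; first by rewrite big_nil coprimep1.
rewrite inE negb_or => /andP[ab as_].
rewrite big_cons coprimepMr IH2 // andbT minPoly_coprime //.
by apply: contra ab => /eqP/inj ->.
Qed.

Lemma core m N N' (u : 'I_m -> L)
  (hdist : injective (fun i => minPoly 1%VS (u i)))
  (A : forall i : 'I_m, 'M[F]_(ext_degree (u i), N))
  (hA : forall i, is_A_matrix (A i)) (c : 'cV[F]_N) :
  (N' <= \sum_(i < m) ext_degree (u i))%N ->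
  (forall n : 'I_N, (N' <= n)%N -> c n 0 = 0) ->
  (forall i, A i *m c = 0) -> c = 0.
Proof.
move=> hN' hc hAc.
pose q : {poly L} := \sum_(n < N) ((c n 0)%:A)%:P * 'X^n.
have szq : (size q <= N')%N.
  apply: (big_ind (fun p : {poly L} => size p <= N')%N).
  - by rewrite size_poly0.
  - move=> p1 p2 h1 h2; apply: leq_trans (size_add _ _) _.
    by rewrite geq_max h1 h2.
  - move=> n _; case: (ltnP n N') => hn.
      by rewrite mul_polyC (leq_trans (size_scale_leq _ _)) // size_polyXn.
    by rewrite hc // scale0r mul0r size_poly0.
have qK : q \is a polyOver 1%VS.
  apply: rpred_sum => n _; apply: rpredM; last exact: polyOverXn.
  by rewrite polyOverC rpredZ // mem1v.
have rq : forall i, root q (u i).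
  move=> i; apply/rootP.
  rewrite horner_sum.
  under eq_bigr do rewrite hornerCM hornerXn mulr_algl (hA i).
  under eq_bigr do rewrite scaler_sumr.
  rewrite exchange_big /=; apply: big1 => j _.
  under eq_bigr do rewrite scalerA.
  rewrite -scaler_suml.
  have H : \sum_n A i j n * c n 0 = 0.
    by have := congr1 (fun M : 'M[F]_(ext_degree (u i), 1) => M j 0) (hAc i); rewrite !mxE.
  rewrite [X in X *: _](_ : _ = 0) ?scale0r //.
  by apply: etrans _ H; apply: eq_bigr => n _; rewrite mulrC.
have q0 : q = 0.
  apply/eqP; apply: contraT => nq.
  have := dvdp_leq nq (prod_dvd hdist (fun i => minPoly_dvdp qK (rq i))).
  rewrite size_prod; last by move=> i _; rewrite monic_neq0 ?monic_minPoly.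
  under eq_bigr do rewrite size_minPoly.
  rewrite (eq_bigr (fun i => (ext_degree (u i) + 1)%N)); last by move=> i _; rewrite addn1.
  rewrite big_split /= sum1_card -addSn addnK => h.
  have := leq_trans h (leq_trans szq hN'); by rewrite ltnn.
apply/matrixP => n z; rewrite (ord1 z) mxE.
have := congr1 (fun p : {poly L} => p`_n) q0.
rewrite coef_sum coef0 (bigD1 n) //= big1 => [|k kn].
  rewrite coefCM coefXn eqxx mulr1 addr0 => /eqP.
  by rewrite scaler_eq0 oner_eq0 orbF => /eqP.
rewrite coefCM coefXn mulrC; case: eqP => [/val_inj h|_]; last by rewrite mul0r.
by subst; rewrite eqxx in kn.
Qed.
End S.

Theorem lemma2p2 (F : finFieldType) (L : fieldExtType F) (N m : nat)
  (hN : (0 < N)%N) (hm : (0 < m)%N) (u : 'I_m -> L)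
  (hdist : injective (fun i => minPoly 1%VS (u i)))
  (A : forall i : 'I_m, 'M[F]_(ext_degree (u i), N))
  (hA : forall i, is_A_matrix (A i)) :
  \rank (\mxcol_(i < m) A i) = minn (\sum_(i < m) ext_degree (u i)) N.
Proof.
set K := (\sum_(i < m) ext_degree (u i))%N.
set M := \mxcol_(i < m) A i.
set N' := minn K N.
have hN'K : (N' <= K)%N by apply: geq_minl.
have hN'N : (N' <= N)%N by apply: geq_minr.
pose E : 'M[F]_(N, N') := \matrix_(n, n') ((n : nat) == n')%:R.
set B := (M *m E)^T.
have kB : kermx B = 0.
  apply/row_matrixP => r; rewrite row0.
  set w := row r (kermx B).
  have wB : w *m B = 0 by rewrite /w -row_mul mulmx_ker row0.
  set c := E *m w^T.
  have Mc : M *m c = 0.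
    by rewrite /c mulmxA -[M *m E]trmxK -trmx_mul wB trmx0.
  have c0 : c = 0.
    apply: (core hdist hA hN'K).
      move=> n hn; rewrite /c mxE big1 // => n' _.
      rewrite !mxE; case: eqP => [h|_]; last by rewrite mul0r.
      by move: (ltn_ord n'); rewrite -h ltnNge hn.
    move=> i; have := congr1 (fun X => submxcol X i) Mc.
    by rewrite /M mxcol_mul mxcolK submxcol0.
  apply/matrixP => z n'; rewrite (ord1 z) mxE.
  have := congr1 (fun X : 'cV[F]_N => X (widen_ord hN'N n') 0) c0.
  rewrite /c !mxE (bigD1 n') //= big1 => [|k kn].
    by rewrite !mxE eqxx mul1r addr0.
  rewrite !mxE; case: eqP => [h|_]; last by rewrite mul0r.
  by case/eqP: kn; apply/val_inj; rewrite /= -h.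
have rB : \rank B = N'.
  apply/eqP; rewrite eqn_leq rank_leq_row /=.
  have := mxrank_ker B; rewrite kB mxrank0 => /esym/eqP.
  by rewrite subn_eq0.
apply/eqP; rewrite eqn_leq leq_min rank_leq_row rank_leq_col /=.
by rewrite -{1}rB mxrank_tr mxrankM_maxl.
Qed.
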